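(* Let $\alpha\in(0,1)$, $p=1$, and $\frac1q=1-\frac\alpha n$. Then for every $f$ with $\|f\|_{W^{\alpha,1}}<\infty$, \[ \|f\|_{GaRo_q}\le n^{(n+\alpha)/2}\|f\|_{W^{\alpha,1}}. \]
   Context: $Q_0=(0,1)^n$; cubes are subcubes of $Q_0$ with sides parallel to the axes. $P$ is the set of countable families $\{Q_i\}_{i\in I}$ of subcubes of $Q_0$ with pairwise disjoint interiors. $\|f\|_{W^{\alpha,1}}=\int_{Q_0}\int_{Q_0}\frac{|f(x)-f(y)|}{|x-y|^{n+\alpha}}\,dx\,dy$. For $1<q<\infty$, $1/q+1/q'=1$, \[ \|f\|_{GaRo_q}=\sup_{\{Q_i\}\in P}\frac{\sum_{i}\frac1{|Q_i|}\int_{Q_i}\int_{Q_i}|f(x)-f(y)|\,dx\,dy}{(\sum_i|Q_i|)^{1/q'}}. \] *)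

(* Defs.v *)
From HB Require Import structures.
From mathcomp Require Import all_boot all_order all_algebra.
From mathcomp Require Import all_classical all_reals all_analysis.
Set Implicit Arguments. Unset Strict Implicit. Unset Printing Implicit Defensive.
Import Order.TTheory GRing.Theory Num.Theory.
Local Open Scope classical_set_scope.
Local Open Scope ring_scope.

(* Points of R^n are n-tuples of reals; n.-tuple R carries the product
   (Borel) sigma-algebra generated by the coordinate projections. *)

(* n-dimensional Lebesgue integral of a nonnegative function, defined as the
   iterated one-dimensional Lebesgue integral (Tonelli: it coincides with the
   integral w.r.t. n-dimensional Lebesgue measure for nonnegative measurable
   integrands). *)
Fixpoint iint (R : realType) (n : nat) : (n.-tuple R -> \bar R) -> \bar R :=
  match n return (n.-tuple R -> \bar R) -> \bar R with
  | 0 => fun g => g [tuple]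
  | m.+1 => fun g =>
      (\int[@lebesgue_measure R]_(x in [set: R])
         iint (fun t : m.-tuple R => g (cons_tuple x t)))%E
  end.

Definition setint (R : realType) (n : nat) (A : set (n.-tuple R))
  (g : n.-tuple R -> \bar R) : \bar R :=
  iint (fun x => if x \in A then g x else 0%E).

Definition cube (R : realType) (n : nat) (a : n.-tuple R) (l : R)
  : set (n.-tuple R) :=
  [set x | forall i : 'I_n, tnth a i < tnth x i < tnth a i + l].

Definition Q0 (R : realType) (n : nat) : set (n.-tuple R) :=
  cube [tuple (0:R) | i < n] 1.

Definition edist (R : realType) (n : nat) (x y : n.-tuple R) : R :=
  Num.sqrt (\sum_(i < n) (tnth x i - tnth y i) ^+ 2).

Definition W_alpha1 (R : realType) (n : nat) (alpha : R)
  (f : n.-tuple R -> R) : \bar R :=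
  setint (@Q0 R n) (fun x => setint (@Q0 R n) (fun y =>
    (`|f x - f y| / (edist x y) `^ (n%:R + alpha))%:E)).

(* {Q_i}_{i in I} (I a countable nonempty index set, cube i = cube (a i) (l i))
   is a family of subcubes of Q_0 with pairwise disjoint interiors *)
Definition admissible (R : realType) (n : nat) (I : set nat)
  (a : nat -> n.-tuple R) (l : nat -> R) : Prop :=
  I !=set0 /\
  (forall i, I i -> 0 < l i /\ cube (a i) (l i) `<=` @Q0 R n) /\
  (forall i j, I i -> I j -> i <> j ->
     cube (a i) (l i) `&` cube (a j) (l j) = set0).

(* the quotient in the definition of ||f||_{GaRo_q}; |Q_i| = l_i^n *)
Definition GaRo_quot (R : realType) (n : nat) (q' : R) (f : n.-tuple R -> R)
  (I : set nat) (a : nat -> n.-tuple R) (l : nat -> R) : \bar R :=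
  ((\esum_(i in I)
      (((l i) ^+ n)^-1)%:E *
      setint (cube (a i) (l i)) (fun x => setint (cube (a i) (l i))
        (fun y => (`|f x - f y|)%:E)))
   / ((fine (\esum_(i in I) ((l i) ^+ n)%:E)) `^ (q'^-1))%:E)%E.

Definition GaRo (R : realType) (n : nat) (q' : R) (f : n.-tuple R -> R)
  : \bar R :=
  ereal_sup [set r | exists (I : set nat) (a : nat -> n.-tuple R) (l : nat -> R),
      admissible I a l /\ r = GaRo_quot q' f I a l].

(* Main.v *)
Require Import Defs.
From HB Require Import structures.
From mathcomp Require Import all_boot all_order all_algebra.
From mathcomp Require Import all_classical all_reals all_analysis.
From mathcomp Require Import ring lra.
Import Order.TTheory GRing.Theory Num.Theory.
Import Defs.
Local Open Scope classical_set_scope.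
Local Open Scope ring_scope.
Import HBNNSimple.
Section one.
Local Open Scope ereal_scope.
Context (R : realType).
Local Notation mu := (@lebesgue_measure R).

Lemma int_le (f g : R -> \bar R) : (forall x, 0 <= f x) -> (forall x, f x <= g x) ->
  \int[mu]_(x in [set: R]) f x <= \int[mu]_(x in [set: R]) g x.
Proof.
move=> f0 fg; have g0 x : 0 <= g x by apply: le_trans (fg x).
rewrite !ge0_integralTE//; apply: ge_ereal_sup => _ [h hf <-].
by apply: ereal_sup_ubound; exists h => // x; apply: le_trans (fg x).
Qed.

Lemma int_add (f g : R -> \bar R) : (forall x, 0 <= f x) -> (forall x, 0 <= g x) ->
  \int[mu]_(x in [set: R]) f x + \int[mu]_(x in [set: R]) g x <=
  \int[mu]_(x in [set: R]) (f x + g x).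
Proof.
move=> f0 g0; have fg0 x : 0 <= f x + g x by rewrite adde_ge0.
rewrite !ge0_integralTE//.
set S1 := ereal_sup _; set S2 := ereal_sup _; set T := ereal_sup _.
have S2T : S2 <= T.
  apply: ge_ereal_sup => _ [h2 h2g <-]; apply: ereal_sup_ubound; exists h2 => //= x.
  by apply: le_trans (h2g x) _; rewrite leeDr.
have S20 : 0 <= S2.
  by apply: ereal_sup_ubound; exists nnsfun0 => //; exact: sintegral0.
have T0 : 0 <= T by apply: le_trans S2T.
have [Ty|Tfin] := eqVneq T +oo; first by rewrite Ty leey.
have Tf : T \is a fin_num by rewrite ge0_fin_numE// ltey.
have S2f : S2 \is a fin_num by rewrite ge0_fin_numE// (le_lt_trans S2T)// ltey.
rewrite -leeBrDr//; apply: ge_ereal_sup => _ [h1 h1f <-].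
have h1T : sintegral mu h1 <= T.
  apply: ereal_sup_ubound; exists h1 => //= x.
  by apply: le_trans (h1f x) _; rewrite leeDl.
have h1f' : sintegral mu h1 \is a fin_num.
  by rewrite ge0_fin_numE ?sintegral_ge0// (le_lt_trans h1T)// ltey.
rewrite leeBrDr// -leeBrDl//; apply: ge_ereal_sup => _ [h2 h2g <-].
rewrite leeBrDl// -sintegralD; apply: ereal_sup_ubound.
exists (add_nnsfun h1 h2) => //= x; rewrite EFinD; exact: leeD.
Qed.

Lemma int_scale (c : R) (f : R -> \bar R) : (0 < c)%R -> (forall x, 0 <= f x) ->
  \int[mu]_(x in [set: R]) (c%:E * f x) <= c%:E * \int[mu]_(x in [set: R]) f x.
Proof.
move=> c0 f0; have cf0 x : 0 <= c%:E * f x by rewrite mule_ge0// lee_fin ltW.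
rewrite !ge0_integralTE//; apply: ge_ereal_sup => _ [h hf <-].
have ic0 : (0 <= c^-1)%R by rewrite invr_ge0 ltW.
have E := sintegralrM mu (c^-1)%R h.
have -> : sintegral mu h = c%:E * sintegral mu (cst (c^-1)%R \* h)%R.
  by rewrite E muleA -EFinM divff ?gt_eqF// mul1e.
apply: lee_wpmul2l; first by rewrite lee_fin ltW.
apply: ereal_sup_ubound.
exists (scale_nnsfun h ic0) => //= x.
rewrite EFinM; apply: le_trans (lee_wpmul2l _ (hf x)) _; first by rewrite lee_fin.
by rewrite muleA -EFinM mulVf ?gt_eqF// mul1e.
Qed.
End one.
Arguments int_le {R}. Arguments int_add {R}. Arguments int_scale {R}.

Section multi.
Local Open Scope ereal_scope.
Context (R : realType).

Lemma iint_ge0 n (g : n.-tuple R -> \bar R) : (forall x, 0 <= g x) -> 0 <= iint g.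
Proof.
elim: n g => [|m IH] g g0 /=; first exact: g0.
by apply: integral_ge0 => x _; apply: IH => t; exact: g0.
Qed.

Lemma iint_le n (g1 g2 : n.-tuple R -> \bar R) : (forall x, 0 <= g1 x) ->
  (forall x, g1 x <= g2 x) -> iint g1 <= iint g2.
Proof.
elim: n g1 g2 => [|m IH] g1 g2 g0 g12 /=; first exact: g12.
by apply: int_le => x; [apply: iint_ge0 | apply: IH].
Qed.

Lemma iint_add n (g1 g2 : n.-tuple R -> \bar R) : (forall x, 0 <= g1 x) ->
  (forall x, 0 <= g2 x) -> iint g1 + iint g2 <= iint (fun x => g1 x + g2 x).
Proof.
elim: n g1 g2 => [|m IH] g1 g2 g10 g20 /=; first by [].
apply: le_trans (int_add _ _ _ _) _; try by move=> x; apply: iint_ge0.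
apply: int_le => x; first by rewrite adde_ge0 // iint_ge0.
exact: IH.
Qed.

Lemma iint_scale n c (g : n.-tuple R -> \bar R) : (0 < c)%R ->
  (forall x, 0 <= g x) -> iint (fun x => c%:E * g x) <= c%:E * iint g.
Proof.
elim: n g => [|m IH] g c0 g0 /=; first by [].
apply: le_trans (int_scale _ _ c0 _); last by move=> x; apply: iint_ge0.
apply: int_le => x; first by apply: iint_ge0 => t; rewrite mule_ge0// lee_fin ltW.
exact: IH.
Qed.

Lemma iint0 n : iint (fun _ : n.-tuple R => 0) = 0.
Proof.
elim: n => [|m IH] //=.
by rewrite (_ : (fun x => _) = cst 0) ?integral0//; apply: funext => x; rewrite IH.
Qed.


Lemma iint_sum n (I : Type) (s : seq I) (g : I -> n.-tuple R -> \bar R) :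
  (forall i x, 0 <= g i x) ->
  \sum_(i <- s) iint (g i) <= iint (fun x => \sum_(i <- s) g i x).
Proof.
move=> g0; elim: s => [|i s IH].
  rewrite big_nil (_ : (fun x => _) = fun _ => 0) ?iint0//.
  by apply: funext => x; rewrite big_nil.
rewrite big_cons (_ : (fun x => _) = fun x => g i x + \sum_(j <- s) g j x); last first.
  by apply: funext => x; rewrite big_cons.
apply: le_trans (@iint_add _ (g i) (fun x => \sum_(j <- s) g j x) _ _).
- by rewrite leeD2l.
- exact: g0.
- by move=> x; rewrite sume_ge0.
Qed.
End multi.

Section cubeS.
Context (R : realType).

Lemma cube_cons m (a : m.+1.-tuple R) l (x : R) (t : m.-tuple R) :
  (cons_tuple x t \in cube a l) =
  ((x \in `]tnth a ord0, tnth a ord0 + l[%classic) && (t \in cube (behead_tuple a) l)).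
Proof.
apply/idP/andP => [|[]].
  rewrite in_setE /= => H; split.
    by rewrite in_setE /= in_itv /=; have := H ord0; rewrite (tnth_nth 0).
  rewrite in_setE /= => j; have := H (lift ord0 j).
  by rewrite !(tnth_nth 0) /= nth_behead.
rewrite !in_setE /= in_itv /= => H1 H2 i.
case: (unliftP ord0 i) => [j ->|->]; last by rewrite !(tnth_nth 0) in H1 *.
by have := H2 j; rewrite !(tnth_nth 0) /= nth_behead.
Qed.

Lemma iint_cube n (a : n.-tuple R) (l : R) : 0 < l ->
  iint (fun x => if x \in cube a l then 1%E else 0%E) = (l ^+ n)%:E.
Proof.
move=> l0; elim: n a => [|m IH] a /=.
  have -> : [tuple] \in cube a l by rewrite in_setE => -[].
  by rewrite expr0.
set I := `]tnth a ord0, tnth a ord0 + l[%classic.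
rewrite (_ : (fun x => _) = ((cst (l ^+ m)%:E) \_ I)); last first.
  apply: funext => x; rewrite /patch.
  under eq_fun do rewrite cube_cons.
  case: (x \in I) => /=; first exact: IH.
  exact: iint0.
rewrite -integral_mkcond integral_cst; last exact: measurable_itv.
apply: eq_trans (congr1 (fun z => ((l ^+ m)%:E * z)%E) (_ : _ = l%:E)) _; last first.
  by rewrite -EFinM exprS mulrC.
  rewrite /I; apply: eq_trans (lebesgue_measure_itv _) _.
  by rewrite /= lte_fin ltrDl l0 -EFinD addrAC subrr add0r.
Qed.
End cubeS.

Section geo.
Context (R : realType).

Lemma edist_cube n (a : n.-tuple R) l x y : cube a l x -> cube a l y ->
  edist x y <= Num.sqrt n%:R * Num.sqrt (l ^+ 2).
Proof.
move=> hx hy; rewrite /edist -sqrtrM// ler_sqrt; last by rewrite mulr_ge0 ?sqr_ge0.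
apply: le_trans (_ : \sum_(i < n) l ^+ 2 <= _).
  apply: ler_sum => i _.
  have /andP[x1 x2] := hx i; have /andP[y1 y2] := hy i.
  nra.
by rewrite big_const_ord iter_addr_0 mulr_natl.
Qed.

Lemma edist0 n (x y : n.-tuple R) : edist x y = 0 -> x = y.
Proof.
move=> /eqP; rewrite /edist sqrtr_eq0 => H.
have H0 : \sum_(i < n) (tnth x i - tnth y i) ^+ 2 = 0.
  by apply/eqP; rewrite eq_le H sumr_ge0// => i _; rewrite sqr_ge0.
apply: eq_from_tnth => i.
have := @psumr_eq0P _ _ _ _ (fun i _ => sqr_ge0 (tnth x i - tnth y i)) H0 i isT.
by move/eqP; rewrite sqrf_eq0 subr_eq0 => /eqP.
Qed.

Lemma key_pt n (a : n.-tuple R) l alpha (f : n.-tuple R -> R) x y :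
  0 < alpha -> 0 < l -> cube a l x -> cube a l y ->
  `|f x - f y| <= (Num.sqrt n%:R * l) `^ (n%:R + alpha) *
     (`|f x - f y| / edist x y `^ (n%:R + alpha)).
Proof.
move=> a0 l0 hx hy.
have [/edist0 ->|d0] := eqVneq (edist x y) 0; first by rewrite subrr normr0 mul0r mulr0.
have dp : 0 < edist x y by rewrite lt_def d0 sqrtr_ge0.
have p0 : 0 < n%:R + alpha by rewrite ltr_wpDl.
have dpp : 0 < edist x y `^ (n%:R + alpha) by rewrite powR_gt0.
rewrite mulrA ler_pdivlMr// [X in _ <= X]mulrC.
apply: ler_wpM2l; first exact: normr_ge0.
apply: ge0_ler_powR; first exact: ltW.
- by rewrite nnegrE sqrtr_ge0.
- by rewrite nnegrE mulr_ge0 ?sqrtr_ge0 ?ltW.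
by have := (@edist_cube n a l x y hx hy); rewrite sqrtr_sqr gtr0_norm.
Qed.

Lemma const_id n (l alpha : R) : 0 < l ->
  (l ^+ n)^-1 * (Num.sqrt n%:R * l) `^ (n%:R + alpha) =
  n%:R `^ ((n%:R + alpha) / 2) * l `^ alpha.
Proof.
move=> l0.
rewrite powRM ?sqrtr_ge0 ?ltW// -powR12_sqrt// -powRrM powRD; last first.
  by rewrite (gt_eqF l0) implybT.
have -> : l `^ n%:R = l ^+ n by rewrite powR_mulrn// ltW.
rewrite [2^-1 * _]mulrC mulrCA mulrA mulrA divfK//.
by rewrite expf_neq0// gt_eqF.
Qed.

Lemma pow_bound n (l s alpha : R) : (0 < n)%N -> 0 < l -> 0 <= alpha -> l ^+ n <= s ->
  l `^ alpha <= s `^ (alpha / n%:R).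
Proof.
move=> n0 l0 a0 ls.
have -> : l `^ alpha = (l ^+ n) `^ (alpha / n%:R).
  by rewrite -powR_mulrn ?ltW// -powRrM mulrCA divff ?mulr1// pnatr_eq0 -lt0n n0.
have H := @ge0_ler_powR R (alpha / n%:R) (divr_ge0 a0 (ler0n _ _)).
have h1 : l ^+ n \in Num.nneg by rewrite nnegrE exprn_ge0 ?ltW.
have h2 : s \in Num.nneg by rewrite nnegrE (le_trans _ ls)// exprn_ge0 ?ltW.
exact: (H _ _ h1 h2 ls).
Qed.
End geo.


Lemma sum_disj (R : realType) n (s : seq nat) (C : nat -> set (n.-tuple R))
  (G : nat -> n.-tuple R -> \bar R) (B : n.-tuple R -> \bar R) x :
  uniq s -> (forall i j, i \in s -> j \in s -> i <> j -> C i `&` C j = set0) ->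
  (forall i, ~ C i x -> G i x = 0%E) -> (forall i, i \in s -> C i x -> (G i x <= B x)%E) ->
  (0 <= B x)%E -> (\sum_(i <- s) G i x <= B x)%E.
Proof.
move=> us dis G0 GB B0.
have [/hasP [j js xj]|/hasPn nx] := boolP (has (fun i => `[< C i x >]) s).
  rewrite (bigD1_seq j) //= big1_seq ?adde0; first by apply: GB => //; exact/asboolP.
  move=> i /andP[ij iS]; apply: G0 => xi.
  have : (C i `&` C j) x by split => //; exact/asboolP.
  by rewrite (dis i j iS js) //; apply/eqP.
rewrite big1_seq// => i /andP[_ iS]; apply: G0 => xi.
by have /asboolPn := nx i iS.
Qed.

Theorem mainTheorem8 (R : realType) (n : nat) (alpha q q' : R)
  (f : n.-tuple R -> R) :
  (0 < n)%N -> 0 < alpha < 1 ->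
  q^-1 = 1 - alpha / n%:R -> q^-1 + q'^-1 = 1 ->
  measurable_fun (@Q0 R n) f ->
  (W_alpha1 alpha f < +oo)%E ->
  (GaRo q' f <= ((n%:R) `^ ((n%:R + alpha) / 2))%:E * W_alpha1 alpha f)%E.
Proof.
move=> n0 /andP[a0 a1] hq hq' _ Wfin.
have hq'a : q'^-1 = alpha / n%:R.
  by rewrite -[q'^-1](addKr (q^-1)) hq' hq opprB subrK.
set N := n%:R `^ ((n%:R + alpha) / 2).
have N0 : 0 <= N by rewrite powR_ge0.
have h0 (x y : n.-tuple R) : 0 <= `|f x - f y| / edist x y `^ (n%:R + alpha).
  by rewrite divr_ge0 ?powR_ge0.
have W0 : (0 <= W_alpha1 alpha f)%E.
  rewrite /W_alpha1 /setint iint_ge0 // => x; case: ifP => // _.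
  by apply: iint_ge0 => y; case: ifP => // _; rewrite lee_fin.
set w := fine (W_alpha1 alpha f).
have Ww : W_alpha1 alpha f = w%:E by rewrite fineK // ge0_fin_numE.
apply: ge_ereal_sup => _ [I [a [l [[[j Ij] [Hl Hd]] ->]]]].
rewrite /GaRo_quot hq'a.
set S := \esum_(i in I) (l i ^+ n)%:E.
have S1 : (S <= 1)%E.
  apply: ge_ereal_sup => _ [F [finF FI] <-].
  rewrite fsbig_finite //=; set s := finmap.enum_fset _.
  have us : uniq s by exact: finmap.fset_uniq.
  have sI i : i \in s -> I i.
    by move=> iS; apply: FI; move: iS; rewrite in_fset_set// inE.
  apply: le_trans (_ : (\sum_(i <- s) iint (fun x => if x \in cube (a i) (l i) then 1 else 0) <= _)%E).
    rewrite big_seq [X in (_ <= X)%E]big_seq; apply: lee_sum => i iS.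
    by rewrite iint_cube //; exact: (Hl i (sI i iS)).1.
  apply: le_trans (@iint_sum R n nat s (fun i x => if x \in cube (a i) (l i) then 1%E else 0%E) _) _.
    by move=> i x; case: ifP.
  have Q01 : iint (fun x : n.-tuple R => if x \in @Q0 R n then 1%E else 0%E) = 1%E.
    by rewrite /Q0 iint_cube ?expr1n.
  rewrite -[X in (_ <= X)%E]Q01; apply: iint_le => x; first by rewrite sume_ge0 // => i _; case: ifP.
  apply: (@sum_disj R n s (fun i => cube (a i) (l i)) (fun i x => if x \in cube (a i) (l i) then 1%E else 0%E) (fun x => if x \in @Q0 R n then 1%E else 0%E)) => //.
  - by move=> i k iS kS ik; apply: Hd => //; apply: sI.
  - by move=> i xi; rewrite ifF//; apply/negP; rewrite in_setE.
  - move=> i iS xi; rewrite ifT ?mem_set//.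
      exact: (Hl i (sI i iS)).2.
  - by case: ifP.
have S0 : (0 <= S)%E.
  by apply: esum_ge0 => i Ii; rewrite lee_fin exprn_ge0// ltW// (Hl i Ii).1.
have Sfin : S \is a fin_num by rewrite ge0_fin_numE// (le_lt_trans S1)// ltey.
set s := fine S.
have Ss : S = s%:E by rewrite fineK.
have Sge i : I i -> l i ^+ n <= s.
  move=> Ii; rewrite -lee_fin -Ss; apply: esum_ge; exists [set i].
    by split; [exact: finite_set1 | move=> _ ->].
  by rewrite fsbig_set1.
have s0 : 0 < s by apply: lt_le_trans (Sge j Ij); rewrite exprn_gt0// (Hl j Ij).1.
set t := s `^ (alpha / n%:R).
have t0 : 0 < t by rewrite powR_gt0.
have term i : I i -> (((l i ^+ n)^-1)%:E *
     setint (cube (a i) (l i)) (fun x => setint (cube (a i) (l i)) (fun y => (`|f x - f y|)%:E))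
   <= (N * t)%:E * setint (cube (a i) (l i)) (fun x => setint (cube (a i) (l i))
        (fun y => (`|f x - f y| / edist x y `^ (n%:R + alpha))%:E)))%E.
  move=> Ii; have [li0 CQ] := Hl i Ii.
  set c := (Num.sqrt n%:R * l i) `^ (n%:R + alpha).
  have c0 : 0 < c by rewrite powR_gt0// mulr_gt0// sqrtr_gt0 ltr0n.
  set E := setint _ (fun x => setint _ (fun y => (`|f x - f y| / _)%:E)).
  have E0 : (0 <= E)%E.
    rewrite /E /setint iint_ge0 // => x; case: ifP => // _.
    by apply: iint_ge0 => y; case: ifP => // _; rewrite lee_fin.
  have D1 : (setint (cube (a i) (l i)) (fun x => setint (cube (a i) (l i))
      (fun y => (`|f x - f y|)%:E)) <= c%:E * E)%E.
    rewrite /E /setint; apply: le_trans (@iint_scale R n c _ c0 _); last first.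
      move=> x; case: ifP => // _.
      by apply: iint_ge0 => y; case: ifP => // _; rewrite lee_fin.
    apply: iint_le => x.
      case: ifP => // _.
      by apply: iint_ge0 => y; case: ifP => // _; rewrite lee_fin.
    case: ifP => xC; last by rewrite mule0.
    apply: le_trans (@iint_scale R n c _ c0 _); last first.
      by move=> y; case: ifP => // _; rewrite lee_fin.
    apply: iint_le => y; first by case: ifP => // _; rewrite lee_fin.
    case: ifP => yC; last by rewrite mule0.
    by rewrite lee_fin; apply: (@key_pt R n (a i)) => //; rewrite -in_setE ?xC ?yC.
  apply: le_trans (lee_wpmul2l _ D1) _; first by rewrite lee_fin invr_ge0 exprn_ge0// ltW.
  rewrite muleA -EFinM const_id //; apply: lee_wpmul2r => //.
  rewrite lee_fin ler_wpM2l //; apply: pow_bound => //; first exact: ltW.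
  exact: Sge.
have Nt0 : (0 <= N * t) by rewrite mulr_ge0// ltW.
have Num : (\esum_(i in I) (((l i ^+ n)^-1)%:E *
     setint (cube (a i) (l i)) (fun x => setint (cube (a i) (l i)) (fun y => (`|f x - f y|)%:E)))
   <= (N * t)%:E * W_alpha1 alpha f)%E.
  apply: ge_ereal_sup => _ [F [finF FI] <-].
  rewrite fsbig_finite //=; set sq := finmap.enum_fset _.
  have us : uniq sq by exact: finmap.fset_uniq.
  have sI i : i \in sq -> I i.
    by move=> iS; apply: FI; move: iS; rewrite in_fset_set// inE.
  apply: le_trans (_ : (\sum_(i <- sq) ((N * t)%:E * setint (cube (a i) (l i))
      (fun x => setint (cube (a i) (l i))
        (fun y => (`|f x - f y| / edist x y `^ (n%:R + alpha))%:E))) <= _)%E).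
    rewrite big_seq [X in (_ <= X)%E]big_seq; apply: lee_sum => i iS.
    exact: term (sI i iS).
  rewrite -ge0_sume_distrr; last first.
    move=> i _; rewrite /setint iint_ge0 // => x; case: ifP => // _.
    by apply: iint_ge0 => y; case: ifP => // _; rewrite lee_fin.
  apply: lee_wpmul2l; first by rewrite lee_fin.
  rewrite /W_alpha1 /setint.
  apply: le_trans (@iint_sum R n nat sq (fun i x => if x \in cube (a i) (l i) then
      iint (fun y => if y \in cube (a i) (l i) then
        (`|f x - f y| / edist x y `^ (n%:R + alpha))%:E else 0%E) else 0%E) _) _.
    move=> i x; case: ifP => // _.
    by apply: iint_ge0 => y; case: ifP => // _; rewrite lee_fin.
  apply: iint_le => x.
    rewrite sume_ge0 // => i _; case: ifP => // _.
    by apply: iint_ge0 => y; case: ifP => // _; rewrite lee_fin.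
  apply: (@sum_disj R n sq (fun i => cube (a i) (l i)) (fun i x => if x \in cube (a i) (l i) then
      iint (fun y => if y \in cube (a i) (l i) then
        (`|f x - f y| / edist x y `^ (n%:R + alpha))%:E else 0%E) else 0%E)
      (fun x => if x \in @Q0 R n then
      iint (fun y => if y \in @Q0 R n then
        (`|f x - f y| / edist x y `^ (n%:R + alpha))%:E else 0%E) else 0%E)) => //.
  - by move=> i k iS kS ik; apply: Hd => //; apply: sI.
  - by move=> i xi; rewrite ifF//; apply/negP; rewrite in_setE.
  - move=> i iS xi; have [_ CQ] := Hl i (sI i iS).
    have xQ : x \in @Q0 R n by rewrite mem_set //; exact: CQ.
    have xC : x \in cube (a i) (l i) by rewrite mem_set.
    rewrite xC xQ.
    apply: iint_le => y; first by case: ifP => // _; rewrite lee_fin.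
    case: ifP => yC; last by case: ifP => // _; rewrite lee_fin.
    by rewrite ifT// mem_set//; apply: CQ; rewrite -in_setE.
  - case: ifP => // _.
    by apply: iint_ge0 => y; case: ifP => // _; rewrite lee_fin.
rewrite -/S -/s -/t.
rewrite Ww in Num *.
apply: le_trans (lee_wpmul2r _ Num) _.
  by rewrite inver (gt_eqF t0) lee_fin invr_ge0 ltW.
rewrite inver (gt_eqF t0) -!EFinM lee_fin.
have -> : N * t * w * t^-1 = N * w by field; rewrite gt_eqF.
by [].
Qed.
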